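(* For every positive integer $R$ prime to $p$, \[ D_R-S_R=\Delta_R^{(p)}\big(I-(S_R+I)A_R\big)+(\Theta_R-I)^{(p)}S_RA_R+S_R(A_R-I). \]
   Context: Let $p$ be a prime and $K$ a complete discrete valuation field of characteristic $p$ with algebraically closed residue field $k$, normalized valuation $v_K$. Fix $t\in K$ with $v_K(t)=-1$; every $x\in K$ is uniquely $\sum_{l\ge v_K(x)}x_lt^{-l}$ with $x_l\in k$, and $\mathrm{coef}_{K,l}(x)=x_l$. $UT_n(F)$ (resp. $NT_n(F)$) denotes upper triangular $n\times n$ matrices over $F$ with diagonal entries $1$ (resp. $0$); $X^{(p^m)}$ raises every entry of $X$ to the $p^m$-th power. For $X=(x_{i,j})\in UT_n(K)$ put $v_K(X)=\min_{i<j}v_K(x_{i,j})/(j-i)$. Let $n\ge2$ and $L/K$ a totally wildly ramified finite Galois extension with $\mathrm{Gal}(L/K)\cong UT_n(\mathbb F_p)$. Fix $A=(a_{i,j})\in UT_n(K)$ with $\mathrm{coef}_{K,l}(a_{i,j})=0$ for all $i<j$ and $l\in p\mathbb Z\cup\mathbb Z_{\ge0}$, such that $X^{(p)}A=X$ has a solution $\Theta\in UT_n(L)$ whose entries generate $L$ over $K$; fix such $\Theta$. Put $m_A=-v_K(A)$, fix an integer $N>\log_p\big(n(p^{n(n-1)/2}+1)m_A+p\big)+\frac{n(n-1)}2$ and $q=p^N$. For a positive integer $R$ prime to $p$ let $K_R=K(T)$ with $T^q+T^{q-1}=t^R$. Let $t_R\in\overline K$ be the $qR$-th root of $t^R(1+T^{-1})^{-1}$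 congruent to $t^{1/q}$ modulo $t^{1/q}\mathfrak m_{\overline K}$ (so $t_R\in K_R$). Let $\iota_R:K\to K_R$ be the ring isomorphism $\sum_lx_lt^{-l}\mapsto\sum_lx_l^{1/q}t_R^{-l}$, extended to an isomorphism $K_{sep}\to K_{R,sep}=K_{sep}$ and applied entrywise to matrices; $P(x)=x^p-x$ entrywise. Put $A_R=\iota_R(A)$, $\Theta_R=\iota_R(\Theta)$, $W_{R,0}=I$, $W_{R,e}=A_R^{(p^{e-1})}W_{R,e-1}$ ($1\le e\le N$), $\Delta_R=\Theta_R-\Theta W_{R,N}$, $D_R=P(\Delta_R)$, and $S_R=(W_{R,N}^{(p)})^{-1}AW_{R,N-1}^{(p)}-I\in NT_n(K_R)$. *)

(* Defs.v *)
From HB Require Import structures.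
From mathcomp Require Import all_boot all_order all_algebra.
Set Implicit Arguments. Unset Strict Implicit. Unset Printing Implicit Defensive.
Import GRing.Theory.
Local Open Scope ring_scope.

Definition frobmx (F : fieldType) (n : nat) (e : nat) (X : 'M[F]_n) : 'M[F]_n :=
  map_mx (fun x => x ^+ e) X.

Definition is_UT (F : fieldType) (n : nat) (X : 'M[F]_n) : Prop :=
  (forall i j : 'I_n, (j < i)%N -> X i j = 0) /\ (forall i : 'I_n, X i i = 1).

Fixpoint Wmx (F : fieldType) (n : nat) (p : nat) (A : 'M[F]_n) (e : nat) : 'M[F]_n :=
  match e with
  | 0 => 1%:M
  | e'.+1 => frobmx (p ^ e') A *m Wmx p A e'
  end.

(* Main.v *)
Require Import Defs.
From HB Require Import structures.
From mathcomp Require Import all_boot all_order all_algebra.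
Import GRing.Theory.
Local Open Scope ring_scope.

Lemma UT_det1 (F : fieldType) (n : nat) (X : 'M[F]_n) : is_UT X -> \det X = 1.
Proof.
case=> H0 H1; rewrite -det_tr det_trig; last first.
  by apply/is_trig_mxP => i j lij; rewrite mxE H0.
by rewrite big1 // => i _; rewrite mxE H1.
Qed.

Lemma UT_frob (F : fieldType) (n e : nat) (X : 'M[F]_n) :
  (0 < e)%N -> is_UT X -> is_UT (frobmx e X).
Proof.
move=> e0 [H0 H1]; split=> [i j lij|i]; rewrite mxE.
  by rewrite H0 // expr0n; case: e e0.
by rewrite H1 expr1n.
Qed.

Lemma UT_map (F : fieldType) (n : nat) (f : {rmorphism F -> F}) (X : 'M[F]_n) :
  is_UT X -> is_UT (map_mx f X).
Proof.
move=> [H0 H1]; split=> [i j lij|i]; rewrite mxE.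
  by rewrite H0 // rmorph0.
by rewrite H1 rmorph1.
Qed.

Lemma zmod_id (V : zmodType) (X a b c d S : V) :
  X - (b - c) - S = (X - ((a + b) - c)) + (a - d) + (d - S).
Proof.
rewrite -[RHS]addrA [(a - d) + _]addrA subrK addrA; congr (_ - S).
rewrite !opprB opprD -!addrA; congr (X + _).
by congr (_ + _); rewrite addrCA addNr addr0.
Qed.

Theorem lemma13 (p n N : nat) (F : fieldType)
  (iota : nat -> {rmorphism F -> F}) (A Theta : 'M[F]_n) :
  prime p -> p \in [pchar F] -> (2 <= n)%N -> (0 < N)%N ->
  (forall R : nat, bijective (iota R)) ->
  is_UT A -> is_UT Theta -> frobmx p Theta *m A = Theta ->
  forall R : nat, (0 < R)%N -> coprime R p ->
  let AR := map_mx (iota R) A in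
  let ThR := map_mx (iota R) Theta in
  let W := Wmx p AR in
  let Delta := ThR - Theta *m W N in
  let D := frobmx p Delta - Delta in
  let S := invmx (frobmx p (W N)) *m A *m frobmx p (W N.-1) - 1%:M in
  D - S = frobmx p Delta *m (1%:M - (S + 1%:M) *m AR)
          + frobmx p (ThR - 1%:M) *m S *m AR + S *m (AR - 1%:M).
Proof.
move=> pp chF _ N0 _ UA UT HT R _ _ AR ThR W Delta D S.
have frE : forall X : 'M[F]_n, frobmx p X = map_mx (pFrobenius_aut chF) X.
  by move=> X; apply/matrixP => i j; rewrite !mxE.
have UAR : is_UT AR by apply: UT_map.
have HW : forall e, frobmx p (W e) *m AR = W e.+1.
  elim=> [|e IH].
    rewrite /W /= frE map_mx1 mul1mx mulmx1; apply/matrixP => i j.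
    by rewrite !mxE expr1.
  rewrite /W /= frE map_mxM -!frE -/W -mulmxA IH /=; congr (_ *m _).
  by apply/matrixP => i j; rewrite !mxE -exprM expnSr.
have dW : forall e, \det (W e) = 1.
  elim=> [|e IH]; first by rewrite /W /= det1.
  rewrite /W /= det_mulmx -/W IH mulr1; apply: UT_det1; apply: UT_frob => //.
  by rewrite expn_gt0 prime_gt0.
have uFW : frobmx p (W N) \in unitmx.
  by rewrite unitmxE frE det_map_mx dW rmorph1 unitr1.
have H1 : frobmx p (W N) *m (S + 1%:M) = A *m frobmx p (W N.-1).
  by rewrite /S subrK !mulmxA mulmxV // mul1mx.
have H2 : Theta *m W N = frobmx p Theta *m frobmx p (W N) *m (S + 1%:M) *m AR.
  rewrite -[frobmx p Theta *m _ *m _]mulmxA H1 mulmxA HT -mulmxA HW.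
  by case: (N) N0.
have H3 : ThR = frobmx p ThR *m AR.
  rewrite {1}/ThR -HT map_mxM; congr (_ *m _).
  by apply/matrixP => i j; rewrite !mxE rmorphXn.
have FD : frobmx p Delta = frobmx p ThR - frobmx p Theta *m frobmx p (W N).
  by rewrite !frE /Delta map_mxB map_mxM.
have FT1 : frobmx p (ThR - 1%:M) = frobmx p ThR - 1%:M.
  by rewrite !frE map_mxB map_mx1.
rewrite /D FT1 FD /Delta H2 {2}H3.
set T := frobmx p ThR. set V := frobmx p Theta *m frobmx p (W N).
Show.
have E1 : (T - V) *m (1%:M - (S + 1%:M) *m AR)
   = (T - V) - ((T *m S *m AR + T *m AR) - V *m (S + 1%:M) *m AR).
  by rewrite mulmxBr mulmx1 !mulmxA mulmxBl mulmxDr mulmx1 mulmxDl mulNmx mulmxDl.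
have E2 : (T - 1%:M) *m S *m AR = T *m S *m AR - S *m AR.
  by rewrite mulmxBl mul1mx mulmxBl.
have E3 : S *m (AR - 1%:M) = S *m AR - S by rewrite mulmxBr mulmx1.
by rewrite E1 E2 E3 (@zmod_id _ (T - V) (T *m S *m AR) _ _ (S *m AR)).
Qed.
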